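(* Let $E$ be a finite-dimensional real affine space and let $G(E)$ be the set of generalized affine functions on $E$, equipped with the topology of pointwise convergence. Then $G(E)$ is sequentially compact: every sequence in $G(E)$ has a subsequence converging pointwise to an element of $G(E)$.
   Context: A generalized affine function on $E$ is a function $E\to\overline{\mathbb{R}}=\mathbb{R}\cup\{\pm\infty\}$ that is both convex and concave (extended-real-valued sense). The topology of pointwise convergence is the subspace topology from the product topology on $\overline{\mathbb{R}}^{E}$. *)

(* Defs.v *)
From HB Require Import structures.
From mathcomp Require Import all_boot all_order all_algebra.
From mathcomp Require Import all_classical all_reals all_analysis.
Set Implicit Arguments. Unset Strict Implicit. Unset Printing Implicit Defensive.
Import Order.TTheory GRing.Theory Num.Theory.
Local Open Scope ring_scope.
Local Open Scope ereal_scope.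

(* The model of a finite-dimensional real affine space: 'rV[R]_n, R a realType. *)

(* Convexity of an extended-real-valued function: its epigraph
   {(x, t) : f x <= t} (t real) is convex. *)
Definition ext_convex (R : realType) (n : nat) (f : 'rV[R]_n -> \bar R) : Prop :=
  forall (x y : 'rV[R]_n) (t s l : R), (0 <= l <= 1)%R ->
    f x <= t%:E -> f y <= s%:E ->
    f ((1 - l) *: x + l *: y)%R <= ((1 - l) * t + l * s)%:E.

(* Concavity: the hypograph {(x, t) : t <= f x} (t real) is convex. *)
Definition ext_concave (R : realType) (n : nat) (f : 'rV[R]_n -> \bar R) : Prop :=
  forall (x y : 'rV[R]_n) (t s l : R), (0 <= l <= 1)%R ->
    t%:E <= f x -> s%:E <= f y ->
    ((1 - l) * t + l * s)%:E <= f ((1 - l) *: x + l *: y)%R.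

Definition generalized_affine (R : realType) (n : nat) (f : 'rV[R]_n -> \bar R) : Prop :=
  ext_convex f /\ ext_concave f.

(* Main.v *)
Require Import Defs.
From HB Require Import structures.
From mathcomp Require Import all_boot all_order all_algebra.
From mathcomp Require Import all_classical all_reals all_analysis.
From mathcomp Require Import ring lra.
Import Order.TTheory GRing.Theory Num.Theory numFieldNormedType.Exports.
Local Open Scope ring_scope.
Local Open Scope classical_set_scope.
Set Implicit Arguments. Unset Strict Implicit. Unset Printing Implicit Defensive.
Lemma leqT {m n p : nat} : (m <= n -> n <= p -> m <= p)%N.
Proof. by move=> h1 h2; exact: leq_trans h1 h2. Qed.

Definition incr (f : nat -> nat) := forall k, (f k < f k.+1)%N.

Lemma incr_homo f : incr f -> forall i j, (i < j)%N -> (f i < f j)%N.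
Proof. by move=> hf i j; apply: (homo_ltn ltn_trans hf). Qed.

Lemma incr_ge f : incr f -> forall k, (k <= f k)%N.
Proof. by move=> hf; elim=> // k ih; apply: leq_ltn_trans ih (hf k). Qed.

Lemma incr_comp f g : incr f -> incr g -> incr (f \o g).
Proof. by move=> hf hg k; exact: incr_homo hf _ _ (hg k). Qed.

Lemma incr_id : incr id. Proof. by []. Qed.

Definition conv (s : nat -> Prop) :=
  (exists N, forall k, (N <= k)%N -> s k) \/ (exists N, forall k, (N <= k)%N -> ~ s k).

Definition subs (psi phi : nat -> nat) :=
  forall N, exists M, forall k, (M <= k)%N -> exists2 i, (N <= i)%N & psi k = phi i.

Lemma conv_subs (Q : nat -> Prop) psi phi :
  subs psi phi -> conv (fun k => Q (phi k)) -> conv (fun k => Q (psi k)).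
Proof.
move=> hs [[N hN]|[N hN]].
  left; have [M hM] := hs N; exists M => k /hM [i Ni ->]; exact: hN.
right; have [M hM] := hs N; exists M => k /hM [i Ni ->]; exact: hN.
Qed.

Lemma subs_comp phi psi : incr psi -> subs (phi \o psi) phi.
Proof.
move=> hp N; exists N => k Nk; exists (psi k) => //.
exact: leqT Nk (incr_ge hp k).
Qed.

Lemma diagonal (X : Type) (Q : nat -> X -> nat -> Prop) :
  (forall j phi, incr phi -> exists psi, incr psi /\
      forall x, conv (fun k => Q j x (phi (psi k)))) ->
  exists phi, incr phi /\ forall j x, conv (fun k => Q j x (phi k)).
Proof.
move=> H.
have {}H : forall jp : nat * {phi | incr phi}, exists psi : {psi | incr psi},
   forall x, conv (fun k => Q jp.1 x (sval jp.2 (sval psi k))).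
  move=> [j [phi hphi]]; have [psi [hpsi hQ]] := H j phi hphi.
  by exists (exist _ psi hpsi).
have [F hF] := choice H.
pose Phi := fix Phi (j : nat) : {phi | incr phi} :=
  match j with
  | 0 => exist _ (sval (F (0%N, exist _ id incr_id))) (svalP (F (0%N, exist _ id incr_id)))
  | j'.+1 => exist _ (sval (Phi j') \o sval (F (j'.+1, Phi j')))
                     (incr_comp (svalP (Phi j')) (svalP (F (j'.+1, Phi j'))))
  end.
have PhiQ j x : conv (fun k => Q j x (sval (Phi j) k)).
  case: j => [|j] /=; first exact: (hF (0%N, exist _ id incr_id)).
  exact: (hF (j.+1, Phi j)).
have PhiS j k i : (j <= k)%N -> exists2 i', (i <= i')%N & sval (Phi k) i = sval (Phi j) i'.
  move=> jk; elim: k jk i => [|k ih] jk i.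
    by move: jk; rewrite leqn0 => /eqP ->; exists i.
  case: (ltngtP j k.+1) jk => // [jk|->] _; last by exists i.
  have [i' ii' e] := ih jk (sval (F (k.+1, Phi k)) i).
  exists i'; last by rewrite -e.
  apply: leqT ii'; exact: incr_ge (svalP (F (k.+1, Phi k))) i.
exists (fun k => sval (Phi k) k); split.
  move=> k /=; rewrite [X in (_ < X)%N]/=.
  apply: (leq_trans (n := sval (Phi k) (sval (F (k.+1, Phi k)) k.+1))) => //.
  apply: incr_homo; first exact: svalP (Phi k).
  exact: incr_ge (svalP (F (k.+1, Phi k))) k.+1.
move=> j x; apply: (conv_subs _ (PhiQ j x)) => N.
exists (maxn N j) => k; rewrite geq_max => /andP[Nk jk].
have [i' ki' ->] := PhiS j k k jk; exists i' => //; exact: leqT Nk ki'.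
Qed.
Section LinAlg.
Variable R : realType.

Definition cvx m (A : set 'rV[R]_m) := forall x y (l : R), 0 <= l <= 1 ->
  A x -> A y -> A ((1 - l) *: x + l *: y).
Definition hemi m (A : set 'rV[R]_m) := cvx A /\ cvx (~` A).
Definition lin m (a : 'cV[R]_m) (x : 'rV[R]_m) : R := (x *m a) 0 0.
Definition sep m (H : set 'rV[R]_m) a b :=
  (forall x, lin a x < b -> H x) /\ (forall x, H x -> lin a x <= b).

Lemma linD m (a : 'cV[R]_m) x y : lin a (x + y) = lin a x + lin a y.
Proof. by rewrite /lin mulmxDl mxE. Qed.
Lemma linZ m (a : 'cV[R]_m) c x : lin a (c *: x) = c * lin a x.
Proof. by rewrite /lin -scalemxAl mxE. Qed.
Lemma linN m (a : 'cV[R]_m) x : lin a (- x) = - lin a x.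
Proof. by rewrite /lin mulNmx mxE. Qed.
Lemma linB m (a : 'cV[R]_m) x y : lin a (x - y) = lin a x - lin a y.
Proof. by rewrite linD linN. Qed.
Lemma lin0 m (a : 'cV[R]_m) : lin a 0 = 0.
Proof. by rewrite /lin mul0mx mxE. Qed.
Lemma lin_opp m (a : 'cV[R]_m) x : lin (- a) x = - lin a x.
Proof. by rewrite /lin mulmxN mxE. Qed.
Lemma lin_scale m (a : 'cV[R]_m) c x : lin (c *: a) x = c * lin a x.
Proof. by rewrite /lin -scalemxAr mxE. Qed.
Lemma lin_comb m (a : 'cV[R]_m) x y l :
  lin a ((1 - l) *: x + l *: y) = (1 - l) * lin a x + l * lin a y.
Proof. by rewrite linD !linZ. Qed.

Lemma hemiC m (H : set 'rV[R]_m) : hemi H -> hemi (~` H).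
Proof. by move=> [h1 h2]; split => //; rewrite setCK. Qed.

Lemma sepC m (H : set 'rV[R]_m) a b : sep (~` H) a b -> sep H (- a) (- b).
Proof.
move=> [h1 h2]; split => x; rewrite lin_opp.
  rewrite ltrN2 => hx; apply: contrapT => /h2; rewrite leNgt hx //.
move=> Hx; rewrite lerN2 leNgt; apply/negP => /h1; exact.
Qed.

Lemma comb_line m (y w : 'rV[R]_m) c1 c2 l :
  (1 - l) *: (y + c1 *: w) + l *: (y + c2 *: w) = y + ((1 - l) * c1 + l * c2) *: w.
Proof.
rewrite !scalerDr !scalerA addrACA -scalerDl subrK scale1r.
by rewrite scalerDl.
Qed.

Definition pt m (t : R) (y : 'rV[R]_m) : 'rV[R]_(1 + m) := row_mx (t%:M) y.

Lemma pt_comb m t1 t2 (y1 y2 : 'rV[R]_m) l :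
  (1 - l) *: pt t1 y1 + l *: pt t2 y2 = pt ((1 - l) * t1 + l * t2) ((1 - l) *: y1 + l *: y2).
Proof.
by rewrite /pt !scale_row_mx add_row_mx !scale_scalar_mx -raddfD.
Qed.

Lemma pt_surj m (x : 'rV[R]_(1 + m)) : exists t y, x = pt t y.
Proof.
exists (lsubmx x 0 0), (rsubmx x); rewrite /pt -mx11_scalar.
by rewrite hsubmxK.
Qed.

Lemma lin_pt m (al : R) (a : 'cV[R]_m) t y :
  lin (col_mx al%:M a) (pt t y) = t * al + lin a y.
Proof.
by rewrite /lin /pt mul_row_col mxE -scalar_mxM mxE mulr1n.
Qed.

End LinAlg.
Section Affine.
Variable R : realType.

Lemma affine_rep m (f : 'rV[R]_m -> R) :
  (forall x y l, 0 <= l <= 1 -> f ((1 - l) *: x + l *: y) = (1 - l) * f x + l * f y) ->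
  exists (c : 'cV[R]_m) (e : R), forall y, f y = lin c y + e.
Proof.
move=> hf; pose g y := f y - f 0.
have h1 l y : 0 <= l <= 1 -> g (l *: y) = l * g y.
  move=> hl; rewrite /g; have := hf 0 y l hl.
  rewrite scaler0 add0r => ->; ring.
have hh : 0 <= (2^-1 : R) <= 1.
  apply/andP; split; first by rewrite invr_ge0 ler0n.
  by rewrite invf_le1 ?ler1n // ltr0n.
have h2 y : g (- y) = - g y.
  have := hf y (- y) 2^-1 hh.
  have -> : (1 - 2^-1 : R) = 2^-1 by field.
  rewrite scalerN subrr /g => e.
  by rewrite e; field.
have h3 l y : 0 <= l -> g (l *: y) = l * g y.
  move=> l0; have [l1|l1] := leP l 1; first by apply: h1; rewrite l0 l1.
  have lp : 0 < l by apply: lt_trans l1.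
  have := h1 l^-1 (l *: y).
  rewrite scalerA mulVf ?gt_eqF // scale1r => -> //.
    by field; rewrite gt_eqF.
  by rewrite invr_ge0 ltW //= invf_le1 // ltW.
have h4 l y : g (l *: y) = l * g y.
  have [l0|l0] := leP 0 l; first exact: h3.
  have -> : l *: y = - ((- l) *: y) by rewrite scaleNr opprK.
  by rewrite h2 h3 ?oppr_ge0 ?ltW //; ring.
have h5 x y : g (x + y) = g x + g y.
  have -> : x + y = 2 *: ((1 - 2^-1) *: x + 2^-1 *: y).
    have -> : (1 - 2^-1 : R) = 2^-1 by field.
    by rewrite -scalerDr scalerA mulfV ?pnatr_eq0 // scale1r.
  rewrite h4 /g hf //.
  have -> : (1 - 2^-1 : R) = 2^-1 by field.
  by field.
have g0 : g 0 = 0 by rewrite /g subrr.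
exists (\col_i g 'e_i), (f 0) => y.
have -> : f y = g y + f 0 by rewrite /g subrK.
congr (_ + _).
rewrite {1}(row_sum_delta y) (big_morph g h5 g0) /lin mxE.
by apply: eq_bigr => i _; rewrite h4 mxE.
Qed.

End Affine.
Section Sep.
Variable R : realType.

Definition SEP m := forall H : set 'rV[R]_m, hemi H ->
  exists (a : 'cV[R]_m) (b : R), (a != 0 \/ b != 0) /\ sep H a b.

Lemma normB (x : R) : - `|x| <= x /\ x <= `|x|.
Proof. split; last exact: ler_norm. by rewrite lerNl -normrN ler_norm. Qed.

Lemma al_gt0 m (a : 'cV[R]_m) : a != 0 -> 0 < lin a a^T.
Proof.
move=> an0; have [i hi] : exists i, a i 0 != 0.
  apply/not_existsP => hn; move/eqP: an0; apply; apply/matrixP => i j.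
  by rewrite (ord1 j) mxE; have := hn i; case: eqP.
rewrite /lin mxE (bigD1 i) //= !mxE -expr2.
have h1 : 0 < a i 0 ^+ 2 by rewrite lt_def sqrf_eq0 hi sqr_ge0.
have h2 : 0 <= \sum_(j < m | j != i) a^T 0 j * a j 0.
  by apply: sumr_ge0 => j _; rewrite !mxE -expr2 sqr_ge0.
lra.
Qed.

Lemma sep0 : SEP 0.
Proof.
move=> H _; have [h|h] := pselect (H 0).
  exists 0, 1; split; first by right; rewrite oner_eq0.
  by split => x; rewrite (thinmx0 x) // => _; rewrite lin0 ler01.
exists 0, (-1); split; first by right; rewrite oppr_eq0 oner_eq0.
split => x; rewrite (thinmx0 x) //; rewrite lin0 => hx; first by move: hx; rewrite ltr0N1.
Qed.

Lemma half01 : 0 <= (2^-1 : R) <= 1.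
Proof. apply/andP; split; first by rewrite invr_ge0 ler0n. by rewrite invf_le1 ?ler1n // ltr0n. Qed.

Lemma caseI m (H : set 'rV[R]_(1 + m)) : hemi H -> SEP m ->
  (exists y0, forall t, H (pt t y0)) ->
  exists (a : 'cV[R]_(1 + m)) (b : R), (a != 0 \/ b != 0) /\ sep H a b.
Proof.
move=> [cH cC] IH [y0 hy0].
pose U := fun y => forall t, H (pt t y).
have hU : hemi U.
  split.
  - move=> y1 y2 l hl h1 h2 t; have := cH _ _ _ hl (h1 t) (h2 t).
    by rewrite pt_comb; have -> : (1 - l) * t + l * t = t by ring.
  - move=> y1 y2 l hl h1 h2.
    have [t1 n1] : exists t, ~ H (pt t y1) by apply/existsNP.
    have [t2 n2] : exists t, ~ H (pt t y2) by apply/existsNP.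
    move=> hU; apply: (cC _ _ _ hl n1 n2); rewrite pt_comb; exact: hU.
have [a' [b' [nz [s1 s2]]]] := IH U hU.
exists (col_mx 0%:M a'), b'.
have E t y : lin (col_mx 0%:M a') (pt t y) = lin a' y by rewrite lin_pt mulr0 add0r.
split.
  case: nz => [ha|hb]; last by right.
  by left; rewrite col_mx_eq0 negb_and ha orbT.
split.
  move=> x; have [t [y ->]] := pt_surj x; rewrite E => /s1 Uy; exact: Uy t.
move=> x; have [t1 [y1 ->]] := pt_surj x; rewrite E => Hx.
rewrite leNgt; apply/negP => hlt.
have hl0 := s2 y0 hy0.
have [a0|an0] := eqVneq a' 0.
  move: hlt hl0; rewrite a0 /lin !mulmx0 !mxE => h1 h2.
  by have := lt_le_trans h1 h2; rewrite ltxx.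
have alp := al_gt0 an0.
pose al := lin a' a'^T.
pose d := lin a' y1 - b'.
have dp : 0 < d by rewrite /d subr_gt0.
pose w := (d / (4 * al)) *: a'^T.
have lw : lin a' w = d / 4 by rewrite /w linZ -/al; field; rewrite gt_eqF.
pose yw := y1 + 2 *: w; pose yu := y1 + (-8) *: w; pose z := y1 + (-2) *: w.
have Uyu : U yu by apply: s1; rewrite /yu linD linZ lw; rewrite /d; lra.
have nUz : ~ U z by move=> /s2; rewrite /z linD linZ lw /d; lra.
have [tz htz] : exists t, ~ H (pt t z) by apply/existsNP.
have nUy1 : ~ U y1 by move=> /s2; rewrite /d in dp; lra.
have [t2 ht2] : exists t, ~ H (pt t y1) by apply/existsNP.
have l45 : 0 <= (4 / 5 : R) <= 1 by apply/andP; split; lra.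
have W t : ~ H (pt t yw).
  move=> hw; apply: ht2.
  have := cH (pt (5 * t2 - 4 * t) yu) (pt t yw) (4/5) l45 (Uyu _) hw.
  rewrite pt_comb /yu /yw comb_line.
  have -> : ((1 - 4/5) * -8 + 4/5 * 2 : R) = 0 by field.
  have -> : ((1 - 4/5) * (5 * t2 - 4 * t) + 4/5 * t : R) = t2 by field.
  by rewrite scale0r addr0.
have := cC (pt tz z) (pt (2 * t1 - tz) yw) (2^-1) half01 htz (W _).
rewrite pt_comb /z /yw comb_line.
have -> : ((1 - 2^-1) * -2 + 2^-1 * 2 : R) = 0 by field.
have -> : ((1 - 2^-1) * tz + 2^-1 * (2 * t1 - tz) : R) = t1 by field.
by rewrite scale0r addr0.
Qed.

End Sep.
Section Sep2.
Variable R : realType.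

Lemma caseDown m (H : set 'rV[R]_(1 + m)) : hemi H ->
  (forall y, exists t, H (pt t y)) -> (forall y, exists t, ~ H (pt t y)) ->
  (forall y s t, s <= t -> H (pt t y) -> H (pt s y)) ->
  exists (a : 'cV[R]_(1 + m)) (b : R), (a != 0 \/ b != 0) /\ sep H a b.
Proof.
move=> [cH cC] hin hout down.
pose T y := [set t | H (pt t y)].
have hs y : has_sup (T y).
  split; first by have [t ht] := hin y; exists t.
  have [t0 ht0] := hout y; exists t0 => t ht; rewrite leNgt; apply/negP => lt0.
  by apply: ht0; apply: down ht; exact: ltW.
pose tau y := sup (T y).
have in_lt y t : t < tau y -> H (pt t y).
  move=> lt; have ep : 0 < tau y - t by rewrite subr_gt0.
  have [e Te he] := sup_adherent ep (hs y).
  apply: down Te; rewrite /tau in he; rewrite -/(tau y); lra.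
have out_gt y t : tau y < t -> ~ H (pt t y).
  move=> lt ht; have := sup_upper_bound (hs y) ht; rewrite -/(tau y) => le.
  lra.
have aff y1 y2 l : 0 <= l <= 1 ->
    tau ((1 - l) *: y1 + l *: y2) = (1 - l) * tau y1 + l * tau y2.
  move=> hl; have /andP[l0 l1] := hl; apply/eqP; rewrite eq_le; apply/andP; split.
    apply/ler_addgt0Pr => e e0.
    rewrite leNgt; apply/negP => hlt; have hin' := in_lt _ _ hlt.
    have o1 : ~ H (pt (tau y1 + e) y1) by apply: out_gt; lra.
    have o2 : ~ H (pt (tau y2 + e) y2) by apply: out_gt; lra.
    have := cC _ _ _ hl o1 o2; rewrite pt_comb.
    have -> : (1 - l) * (tau y1 + e) + l * (tau y2 + e) = (1 - l) * tau y1 + l * tau y2 + e by ring.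
    by move=> /(_ hin').
  apply/ler_addgt0Pr => e e0.
  have i1 : H (pt (tau y1 - e) y1) by apply: in_lt; lra.
  have i2 : H (pt (tau y2 - e) y2) by apply: in_lt; lra.
  have := cH _ _ _ hl i1 i2.
  rewrite pt_comb => /(sup_upper_bound (hs _)); rewrite -/(tau _) => h.
  have: (1 - l) * (tau y1 - e) + l * (tau y2 - e) = (1 - l) * tau y1 + l * tau y2 - e by ring.
  move=> eq; rewrite eq in h; lra.
have [c [e0 hc]] := affine_rep aff.
exists (col_mx 1%:M (- c)), e0.
have E t y : lin (col_mx 1%:M (- c)) (pt t y) = t - lin c y by rewrite lin_pt mulr1 lin_opp.
split.
  left; rewrite col_mx_eq0 negb_and; apply/orP; left.
  apply/negP => /eqP/matrixP/(_ 0 0); rewrite !mxE /= => /eqP; by rewrite oner_eq0.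
split.
  move=> x; have [t [y ->]] := pt_surj x; rewrite E => h; apply: in_lt; rewrite hc; lra.
move=> x; have [t [y ->]] := pt_surj x; rewrite E => h.
rewrite leNgt; apply/negP => hlt; apply: (out_gt y t) h; rewrite hc; lra.
Qed.

Lemma betw (A : R -> Prop) :
  (forall a c l, 0 <= l <= 1 -> A a -> A c -> A ((1 - l) * a + l * c)) ->
  forall a b c, a <= b -> b <= c -> A a -> A c -> A b.
Proof.
move=> hA a b c ab bc Aa Ac.
have [ac|ac] := eqVneq a c.
  by have -> : b = a by apply/eqP; rewrite eq_le ab; rewrite ac bc.
have acl : a < c by rewrite lt_neqAle ac (le_trans ab bc).
have hl : 0 <= (b - a) / (c - a) <= 1.
  apply/andP; split; first by apply: divr_ge0; lra.
  by rewrite ler_pdivrMr ?subr_gt0 //; lra.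
have := hA a c _ hl Aa Ac.
have -> : (1 - (b - a) / (c - a)) * a + (b - a) / (c - a) * c = b.
  by field; rewrite subr_eq0 eq_sym.
done.
Qed.

Lemma caseCut m (H : set 'rV[R]_(1 + m)) : hemi H ->
  (forall y, exists t, H (pt t y)) -> (forall y, exists t, ~ H (pt t y)) ->
  (forall y s t, s <= t -> H (pt t y) -> H (pt s y)) \/
  (forall y s t, s <= t -> ~ H (pt t y) -> ~ H (pt s y)).
Proof.
move=> [cH cC] hin hout.
have lineH y : forall a c l, 0 <= l <= 1 -> H (pt a y) -> H (pt c y) ->
    H (pt ((1 - l) * a + l * c) y).
  move=> a c l hl h1 h2; have := cH _ _ _ hl h1 h2.
  by rewrite pt_comb -scalerDl subrK scale1r.
have lineC y : forall a c l, 0 <= l <= 1 -> ~ H (pt a y) -> ~ H (pt c y) ->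
    ~ H (pt ((1 - l) * a + l * c) y).
  move=> a c l hl h1 h2; have := cC _ _ _ hl h1 h2.
  by rewrite pt_comb -scalerDl subrK scale1r.
pose down y := forall s t, s <= t -> H (pt t y) -> H (pt s y).
pose up y := forall s t, s <= t -> ~ H (pt t y) -> ~ H (pt s y).
have du y : down y \/ up y.
  have [hd|hd] := pselect (down y); first by left.
  right => s' t' st' nt' Hs'; apply: hd => s t st Ht.
  apply: contrapT => nHs.
  have bH := betw (lineH y); have bC := betw (lineC y).
  have [tt'|tt'] := leP t t'.
    have [ss|ss] := leP s' s.
      by apply: nHs; apply: (bH s' s t) => //.
    by apply: (bC s s' t') => //; exact: ltW.
  by apply: nt'; apply: (bH s' t' t) => //; exact: ltW.
have cons y1 y2 : down y1 -> up y2 -> False.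
  move=> d1 u2.
  have [t1 h1] := hin y1; have [t1' h1'] := hout y1.
  have [t2 h2] := hin y2; have [t2' h2'] := hout y2.
  pose M := `|t1| + `|t1'| + `|t2| + `|t2'|.
  have [n1 n1'] := normB t1; have [n2 n2'] := normB t1'.
  have [n3 n3'] := normB t2; have [n4 n4'] := normB t2'.
  have a1 : H (pt (- M) y1) by apply: d1 h1; rewrite /M; lra.
  have a2 : ~ H (pt M y1) by move=> hM; apply: h1'; apply: d1 hM; rewrite /M; lra.
  have a3 : H (pt M y2).
    apply: contrapT => hM; apply: (u2 t2 M) => //; rewrite /M; lra.
  have a4 : ~ H (pt (- M) y2) by apply: (u2 _ t2') => //; rewrite /M; lra.
  have := cH _ _ _ (half01 R) a1 a3; have := cC _ _ _ (half01 R) a2 a4.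
  rewrite !pt_comb.
  have -> : (1 - 2^-1) * M + 2^-1 * - M = 0 by field.
  have -> : (1 - 2^-1) * - M + 2^-1 * M = 0 by field.
  by move=> hn hp; apply: hn.
have [hd|hd] := pselect (forall y, down y); first by left.
right => y; have [y1 ny1] : exists y1, ~ down y1 by apply/existsNP.
have uy1 : up y1 by case: (du y1).
case: (du y) => // dy; exfalso; exact: cons dy uy1.
Qed.

Theorem sepS m : SEP R m.
Proof.
elim: m => [|m IH]; first exact: sep0.
move=> H hH.
have [[y0 hy0]|nA] := pselect (exists y0, forall t, H (pt t y0)).
  by apply: caseI hH IH _; exists y0.
have [[y0 hy0]|nB] := pselect (exists y0, forall t, ~ H (pt t y0)).
  have [a [b [nz hs]]] := caseI (hemiC hH) IH (ex_intro _ y0 hy0).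
  exists (- a), (- b); split; last exact: sepC.
  by rewrite !oppr_eq0.
have hout y : exists t, ~ H (pt t y).
  by apply/existsNP => hy; apply: nA; exists y.
have hin y : exists t, H (pt t y).
  apply: contrapT => hy; apply: nB; exists y => t ht; apply: hy; by exists t.
have [hd|hu] := caseCut hH hin hout.
  exact: caseDown hH hin hout hd.
have [a [b [nz hs]]] := caseDown (hemiC hH) hout
   (fun y => let: ex_intro t ht := hin y in ex_intro _ t (fun h => h ht)) hu.
exists (- a), (- b); split; last exact: sepC.
by rewrite !oppr_eq0.
Qed.

End Sep2.
Section BW.
Variable R : realType.

Lemma sub_cvg {T : topologicalType} (v : nat -> T) (l : T) psi :
  incr psi -> v @ \oo --> l -> (v \o psi) @ \oo --> l.
Proof.
move=> hp hv; apply: cvg_comp hv.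
apply/cvgnyPge => A; exists A => // k /= Ak; exact: leqT Ak (incr_ge hp k).
Qed.

Lemma BW1 (u : nat -> R) : (forall k, `|u k| <= 1) ->
  exists psi, incr psi /\ exists l : R, (u \o psi) @ \oo --> l.
Proof.
move=> hb.
have bu : bounded_fun u.
  exists 1; split; first exact: num_real.
  move=> M M1 x _ /=; exact: le_trans (hb x) (ltW M1).
have [f fi fc] := bolzano_weierstrass bu.
exists f; split; last by apply/cvg_ex.
by move=> k; have /increasing_seqP := fi; move/(_ k); rewrite ltEnat.
Qed.

Lemma BWn p (s : nat -> nat -> R) : (forall j k, `|s j k| <= 1) ->
  exists phi, incr phi /\ forall j, (j < p)%N -> exists l : R, (fun k => s j (phi k)) @ \oo --> l.
Proof.
move=> hb; elim: p => [|p [phi [hphi hl]]].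
  by exists id; split => // j; rewrite ltn0.
have [psi [hpsi [l hl']]] := BW1 (fun k => hb p (phi k)).
exists (phi \o psi); split; first exact: incr_comp.
move=> j; rewrite ltnS leq_eqVlt => /orP[/eqP ->|jp]; first by exists l.
have [l' h] := hl j jp; exists l'; exact: (sub_cvg (v := fun k => s j (phi k))) h.
Qed.

Lemma cvg_bigsum (I : Type) (r : seq I) (f : I -> nat -> R) (l : I -> R) :
  (forall i, f i @ \oo --> l i) ->
  (fun k => \sum_(i <- r) f i k) @ \oo --> \sum_(i <- r) l i.
Proof.
move=> hf; elim: r => [|i r ih].
  rewrite big_nil; under eq_fun do rewrite big_nil; exact: cvg_cst.
rewrite big_cons; under eq_fun do rewrite big_cons.
exact: cvgD (hf i) ih.
Qed.

End BW.
Section HSsec.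
Variable R : realType.

Lemma nz_entry m (a : 'cV[R]_m) : a != 0 -> exists i, a i 0 != 0.
Proof.
move=> an0; apply/not_existsP => hn; move/eqP: an0; apply; apply/matrixP => i j.
by rewrite (ord1 j) mxE; have := hn i; case: eqP.
Qed.

Lemma sep_scale m (H : set 'rV[R]_m) a b c : 0 < c -> sep H a b -> sep H (c *: a) (c * b).
Proof.
move=> c0 [h1 h2]; split => x; rewrite lin_scale.
  by rewrite ltr_pM2l //; exact: h1.
by move=> /h2; rewrite ler_pM2l.
Qed.

Lemma cvx_pull m r (A : set 'rV[R]_m) (x0 : 'rV[R]_m) (B0 : 'M[R]_(r, m)) :
  cvx A -> cvx (fun y => A (x0 + y *m B0)).
Proof.
move=> hA y1 y2 l hl h1 h2; have := hA _ _ _ hl h1 h2.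
have -> : (1 - l) *: (x0 + y1 *m B0) + l *: (x0 + y2 *m B0) =
          x0 + ((1 - l) *: y1 + l *: y2) *m B0.
  rewrite mulmxDl -!scalemxAl !scalerDr addrACA -scalerDl subrK scale1r //.
done.
Qed.

Lemma hemi_pull m r (H : set 'rV[R]_m) (x0 : 'rV[R]_m) (B0 : 'M[R]_(r, m)) :
  hemi H -> hemi (fun y => H (x0 + y *m B0)).
Proof. by move=> [h1 h2]; split; [exact: cvx_pull h1 | exact: cvx_pull h2]. Qed.

Lemma conv_ev (P : nat -> Prop) (Q : nat -> Prop) :
  (\forall k \near \oo, P k) -> (forall k, P k -> Q k) -> (exists N, forall k, (N <= k)%N -> Q k).
Proof. by case=> N _ hN hPQ; exists N => k Nk; apply: hPQ; apply: hN. Qed.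

Theorem HS m (H : nat -> set 'rV[R]_m) : (forall k, hemi (H k)) ->
  exists phi, incr phi /\ forall x, conv (fun k => H (phi k) x).
Proof.
elim/ltn_ind: m H => m IH H hH.
have : forall k, exists p : 'cV[R]_m * R, (p.1 != 0 \/ p.2 != 0) /\ sep (H k) p.1 p.2.
  by move=> k; have [a [b h]] := sepS (hH k); exists (a, b).
case/choice => P hP.
pose N k := \sum_i `|(P k).1 i 0| + `|(P k).2|.
have Ns k : 0 <= \sum_i `|(P k).1 i 0| by apply: sumr_ge0 => i _.
have Np k : 0 < N k.
  have [[ha|hb] _] := hP k.
    have [i hi] := nz_entry ha.
    have : `|(P k).1 i 0| <= \sum_i `|(P k).1 i 0|.
      rewrite (bigD1 i) //= lerDl; exact: sumr_ge0.
    have : 0 < `|(P k).1 i 0| by rewrite normr_gt0.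
    have := normr_ge0 (P k).2; rewrite /N; lra.
  have : 0 < `|(P k).2| by rewrite normr_gt0.
  have := Ns k; rewrite /N; lra.
pose A k := (N k)^-1 *: (P k).1; pose B k := (N k)^-1 * (P k).2.
have sepk k : sep (H k) (A k) (B k).
  by apply: sep_scale; [rewrite invr_gt0 | exact: (hP k).2].
have Ai k i : `|A k i 0| = (N k)^-1 * `|(P k).1 i 0|.
  by rewrite mxE normrM gtr0_norm // invr_gt0.
have Bk k : `|B k| = (N k)^-1 * `|(P k).2|.
  by rewrite normrM gtr0_norm // invr_gt0.
have sumk k : \sum_i `|A k i 0| + `|B k| = 1.
  under eq_bigr do rewrite Ai.
  rewrite -mulr_sumr Bk -mulrDr mulVf //; by rewrite gt_eqF.
have Sk k : 0 <= \sum_i `|A k i 0| by apply: sumr_ge0 => i _.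
pose s j k := if (insub j : option 'I_m) is Some i then A k i 0 else B k.
have sb j k : `|s j k| <= 1.
  rewrite /s; case: (insub j) => [i|].
    have : `|A k i 0| <= \sum_i `|A k i 0|.
      rewrite (bigD1 i) //= lerDl; exact: sumr_ge0.
    have := normr_ge0 (B k); have := sumk k; lra.
  have := sumk k; have := Sk k; lra.
have [phi [hphi hl]] := BWn m.+1 sb.
have : forall j, exists l : R, (j < m.+1)%N -> (fun k => s j (phi k)) @ \oo --> l.
  move=> j; case: (ltnP j m.+1) => hj; last by exists 0.
  by have [l h] := hl j hj; exists l.
case/choice => L hL.
pose a : 'cV[R]_m := \col_(i < m) L i; pose b := L m.
have ca i : (fun k => A (phi k) i 0) @ \oo --> a i 0.
  have := hL i (leqW (ltn_ord i)); rewrite /s valK mxE; exact.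
have cb : (fun k => B (phi k)) @ \oo --> b.
  by have := hL m (ltnSn m); rewrite /s insubF ?ltnn.
have clin x : (fun k => lin (A (phi k)) x - B (phi k)) @ \oo --> lin a x - b.
  apply: cvgB cb; rewrite /lin mxE; under eq_fun do rewrite mxE.
  apply: cvg_bigsum => i; apply: cvgM; [exact: cvg_cst | exact: ca].
have hsum : \sum_i `|a i 0| + `|b| = 1.
  have h : (fun k => \sum_i `|A (phi k) i 0| + `|B (phi k)|) @ \oo --> \sum_i `|a i 0| + `|b|.
    apply: cvgD; last exact: cvg_norm.
    by apply: cvg_bigsum => i; apply: cvg_norm.
  have e : (fun k => \sum_i `|A (phi k) i 0| + `|B (phi k)|) = cst 1.
    by apply: funext => k; rewrite sumk.
  rewrite e in h; exact: (cvg_unique (@Rhausdorff R) h (cvg_cst (1 : R))).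
have off x : lin a x - b != 0 -> conv (fun k => H (phi k) x).
  rewrite neq_lt => /orP[lt|gt].
    left; apply: conv_ev (cvgr_lt _ (clin x) _ lt) _ => k hk.
    by apply: (sepk _).1; lra.
  right; apply: conv_ev (cvgr_gt _ (clin x) _ gt) _ => k hk hx.
  have := (sepk _).2 _ hx; lra.
have [a0|an0] := eqVneq a 0.
  exists phi; split => // x; apply: off.
  move: hsum; rewrite a0 /lin mulmx0 mxE; under eq_bigr do rewrite mxE normr0.
  rewrite big1 // add0r sub0r oppr_eq0 => hb; apply/eqP => b0; move: hb; rewrite b0 normr0.
  by move/eqP; rewrite eq_sym oner_eq0.
pose r := \rank (kermx a).
have rm : (r < m)%N.
  rewrite /r mxrank_ker ltn_subrL; apply/andP; split.
    by rewrite lt0n mxrank_eq0.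
  by apply: leq_trans (rank_leq_row a); rewrite lt0n mxrank_eq0.
pose B0 := row_base (kermx a).
have alp := al_gt0 an0.
pose x0 := (b / lin a a^T) *: a^T.
have lx0 : lin a x0 = b by rewrite /x0 linZ; field; rewrite gt_eqF.
pose G k := fun y => H (phi k) (x0 + y *m B0).
have hGk k : hemi (G k) by apply: hemi_pull; exact: hH.
have [psi [hpsi hG]] := IH r rm G hGk.
exists (phi \o psi); split; first exact: incr_comp.
move=> x; have [hx|hx] := eqVneq (lin a x - b) 0; last first.
  exact: (@conv_subs (fun n => H n x) _ _ (subs_comp phi hpsi) (off x hx)).
have : (x - x0 <= kermx a)%MS.
  apply/sub_kermxP; rewrite [_ *m a]mx11_scalar.
  have -> : ((x - x0) *m a) 0 0 = lin a x - lin a x0 by rewrite -linB.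
  by rewrite lx0 hx; apply/matrixP => i j; rewrite !mxE mul0rn.
rewrite -(eq_row_base (kermx a)) => /submxP [y hy].
have -> : x = x0 + y *m B0 by rewrite -hy addrC subrK.
exact: hG y.
Qed.

End HSsec.
Section Main.
Variable R : realType.
Local Open Scope ereal_scope.

Lemma lt_realE (e : \bar R) (c : R) : e < c%:E -> exists t : R, e <= t%:E /\ (t < c)%R.
Proof.
case: e => [r| |] h; first by exists r; split => //; rewrite lte_fin in h.
  by move: h; rewrite ltNge leey.
by exists (c - 1)%R; split; [rewrite leNye | rewrite ltrBlDr ltrDl ltr01].
Qed.

Lemma comb_lt (t s c l : R) : (0 <= l <= 1)%R -> (t < c)%R -> (s < c)%R ->
  ((1 - l) * t + l * s < c)%R.
Proof.
move=> /andP[l0 l1] tc sc.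
pose mm := (Num.min (c - t) (c - s))%R.
have m1 : (mm <= c - t)%R by rewrite /mm ge_min lexx.
have m2 : (mm <= c - s)%R by rewrite /mm ge_min lexx orbT.
have m0 : (0 < mm)%R by rewrite /mm lt_min !subr_gt0 tc sc.
nra.
Qed.

Lemma lvl_hemi m (f : 'rV[R]_m -> \bar R) (c : R) :
  generalized_affine f -> hemi (fun x => f x < c%:E).
Proof.
move=> [hv hc]; split.
  move=> x y l hl /lt_realE [t [ht tc]] /lt_realE [s [hs sc]].
  apply: le_lt_trans (hv x y t s l hl ht hs) _; rewrite lte_fin; exact: comb_lt.
move=> x y l hl /negP; rewrite -leNgt => hx /negP; rewrite -leNgt => hy.
apply/negP; rewrite -leNgt.
have := hc x y c c l hl hx hy.
by have -> : ((1 - l) * c + l * c = c)%R by ring.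
Qed.

Lemma ereal_rat_between (a b : \bar R) : a < b -> exists q : rat, a < (ratr q)%:E < b.
Proof.
have rb (x y : R) : (x < y)%R -> exists q : rat, (x < ratr q < y)%R.
  by move=> /rat_in_itvoo [q]; rewrite in_itv /= => h; exists q.
case: a => [r| |]; case: b => [s| |] //= h.
- by have [q hq] := rb r s h; exists q; rewrite !lte_fin.
- have h1 : (r < r + 1)%R by rewrite ltrDl ltr01.
  have [q hq] := rb r _ h1.
  by exists q; rewrite ltry andbT lte_fin; case/andP: hq.
- have h1 : (s - 1 < s)%R by rewrite ltrBlDr ltrDl ltr01.
  have [q hq] := rb _ s h1.
  by exists q; rewrite ltNyr /= lte_fin; case/andP: hq.
- have [q hq] := rb 0%R 1%R ltr01.
  by exists q; rewrite ltNyr ltry.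
Qed.

Lemma conv_ereal (v : nat -> \bar R) :
  (forall q : rat, conv (fun k => v k < (ratr q)%:E)) -> exists l : \bar R, v @ \oo --> l.
Proof.
move=> hq.
pose L := ereal_inf (range (esups v)); pose l := ereal_sup (range (einfs v)).
have cL : esups v @ \oo --> L by exact: cvg_esups_inf.
have cl : einfs v @ \oo --> l by exact: cvg_einfs_sup.
have lL : l <= L.
  apply: ge_ereal_sup => _ [n _ <-]; apply: le_ereal_inf_tmp => _ [k _ <-].
  apply: (@le_trans _ _ (einfs v (maxn n k))).
    by apply: nondecreasing_einfs; rewrite leq_maxl.
  apply: le_trans (einfs_le_esups _ _) _.
  by apply: nonincreasing_esups; rewrite leq_maxr.
have Ll : L <= l.
  rewrite leNgt; apply/negP => /ereal_rat_between [q /andP[lq qL]].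
  case: (hq q) => [[N hN]|[N hN]].
    have : esups v N <= (ratr q)%:E.
      apply: ge_ereal_sup => _ [k /= Nk <-]; exact/ltW/hN.
    have : L <= esups v N by apply: ereal_inf_lbound; exists N.
    move=> h1 h2; have := le_trans h1 h2; rewrite leNgt qL //.
  have : (ratr q)%:E <= einfs v N.
    apply: le_ereal_inf_tmp => _ [k /= Nk <-]; rewrite leNgt; apply/negP; exact: hN.
  have : einfs v N <= l by apply: ereal_sup_ubound; exists N.
  move=> h1 h2; have := le_trans h2 h1; rewrite leNgt lq //.
have eL : l = L by apply/eqP; rewrite eq_le lL Ll.
exists l; apply: (squeeze_cvge (f := einfs v) (h := esups v)); last by rewrite eL.
  apply: nearW => n; apply/andP; split.
    by apply: ereal_inf_lbound; exists n => /=.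
  by apply: ereal_sup_ubound; exists n => /=.
done.
Qed.

End Main.
Section Closed.
Variable R : realType.
Local Open Scope ereal_scope.

Lemma ev_lt (w : nat -> \bar R) a b : w @ \oo --> a -> a < b -> \forall k \near \oo, w k < b.
Proof.
move=> h ab; apply: (h [set y | y < b]); apply: open_nbhs_nbhs; split => //.
exact: open_ereal_lt_ereal.
Qed.

Lemma ev_gt (w : nat -> \bar R) a b : w @ \oo --> a -> b < a -> \forall k \near \oo, b < w k.
Proof.
move=> h ab; apply: (h [set y | b < y]); apply: open_nbhs_nbhs; split => //.
exact: open_ereal_gt_ereal.
Qed.

Lemma closed_ga m (v : nat -> 'rV[R]_m -> \bar R) (g : 'rV[R]_m -> \bar R) :
  (forall k, generalized_affine (v k)) -> (forall x, (fun k => v k x) @ \oo --> g x) ->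
  generalized_affine g.
Proof.
move=> hv hg; split.
  move=> x y t s l hl hx hy; apply/lee_addgt0Pr => e e0.
  have ex : \forall k \near \oo, v k x < (t + e)%:E.
    by apply: ev_lt (hg x) _; apply: le_lt_trans hx _; rewrite lte_fin ltrDl.
  have ey : \forall k \near \oo, v k y < (s + e)%:E.
    by apply: ev_lt (hg y) _; apply: le_lt_trans hy _; rewrite lte_fin ltrDl.
  apply: (cvge_le _ (hg _)); apply: filterS2 ex ey => k h1 h2.
  have := (hv k).1 x y (t + e)%R (s + e)%R l hl (ltW h1) (ltW h2).
  have -> : ((1 - l) * (t + e) + l * (s + e) = (1 - l) * t + l * s + e)%R by ring.
  by rewrite EFinD.
move=> x y t s l hl hx hy.
suff h : forall e : R, (0 < e)%R -> ((1 - l) * t + l * s - e)%:E <= g ((1 - l) *: x + l *: y)%R.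
  apply/lee_addgt0Pr => e e0; rewrite -leeBlDr //; rewrite -EFinB; exact: h.
move=> e e0.
have ex : \forall k \near \oo, (t - e)%:E < v k x.
  by apply: ev_gt (hg x) _; apply: lt_le_trans hx; rewrite lte_fin ltrBlDr ltrDl.
have ey : \forall k \near \oo, (s - e)%:E < v k y.
  by apply: ev_gt (hg y) _; apply: lt_le_trans hy; rewrite lte_fin ltrBlDr ltrDl.
apply: (cvge_ge _ (hg _)); apply: filterS2 ex ey => k h1 h2.
have := (hv k).2 x y (t - e)%R (s - e)%R l hl (ltW h1) (ltW h2).
by have -> : ((1 - l) * (t - e) + l * (s - e) = (1 - l) * t + l * s - e)%R by ring.
Qed.

End Closed.

Theorem corollary1 (R : realType) (n : nat) (u : nat -> 'rV[R]_n -> \bar R) :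
  (forall k, generalized_affine (u k)) ->
  exists (phi : nat -> nat) (g : 'rV[R]_n -> \bar R),
    (forall k, (phi k < phi k.+1)%N) /\ generalized_affine g /\
    (forall x, (fun k => u (phi k) x) @ \oo --> g x).
Proof.
move=> hu.
pose qs j : R := ratr (odflt 0%Q (unpickle j)).
have [phi [hphi hc]] := @diagonal _ (fun j x k => (u k x < (qs j)%:E)%E) (fun j phi hphi =>
   HS (H := fun k x => (u (phi k) x < (qs j)%:E)%E) (fun k => lvl_hemi _ (hu (phi k)))).
have cx x : exists l : \bar R, (fun k => u (phi k) x) @ \oo --> l.
  apply: conv_ereal => q; have := hc (pickle q) x; by rewrite /qs pickleK.
have [g hg] := choice cx.
exists phi, g; split; first exact: hphi.
split; last exact: hg.
exact: closed_ga (fun k => hu (phi k)) hg.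
Qed.
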